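(* For every graph $G$ and every positive integer $n \ge 2$, \[ \chi_n(G)\le\begin{cases}\left\lceil \dfrac{\tau(G)-n}{\lceil (2n+2)/3\rceil}\right\rceil+1 & \text{if } 2\le n\le \tau(G),\\ 1 & \text{if } n>\tau(G).\end{cases} \]
   Context: All graphs are finite and simple. The order of a path is its number of vertices, and $\tau(G)$ is the order of a longest path in $G$. For a positive integer $n$, an $n$-detour colouring of $G$ is a colouring of the vertices of $G$ such that no path of order greater than $n$ in $G$ has all its vertices of the same colour (equivalently, each colour class induces a subgraph with no path of order greater than $n$). The $n$th detour chromatic number $\chi_n(G)$ is the minimum number of colours in an $n$-detour colouring of $G$. *)

(* Defs.v *)
From mathcomp Require Import all_boot.
Set Implicit Arguments. Unset Strict Implicit. Unset Printing Implicit Defensive.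

Definition simple_graph (T : finType) (e : rel T) : Prop :=
  symmetric e /\ irreflexive e.

(* A path in G is a nonempty sequence of distinct vertices, consecutive ones adjacent.
   Its order is its number of vertices (= size). *)
Definition is_gpath (T : finType) (e : rel T) (s : seq T) : bool :=
  match s with
  | [::] => false
  | x :: s' => path e x s' && uniq s
  end.

Lemma gpath_size_le (T : finType) (e : rel T) (s : seq T) :
  is_gpath e s -> size s <= #|T|.
Proof.
case: s => [//|x s] /andP[_ u].
by rewrite -(card_uniqP u) max_card.
Qed.

(* "there is a path of order k" (order 0 counted trivially so the set is nonempty) *)
Definition has_path_of_order (T : finType) (e : rel T) (k : nat) : bool :=
  (k == 0) || [exists s : k.-tuple T, is_gpath e s].

Lemma has_path_of_order_ex (T : finType) (e : rel T) :
  exists k, has_path_of_order e k.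
Proof. by exists 0. Qed.

Lemma has_path_of_order_bound (T : finType) (e : rel T) :
  forall k, has_path_of_order e k -> k <= #|T|.
Proof.
move=> k /orP[/eqP -> //|/existsP[s /gpath_size_le]].
by rewrite size_tuple.
Qed.

(* tau(G): the order of a longest path in G (0 for the empty graph). *)
Definition tau (T : finType) (e : rel T) : nat :=
  ex_maxn (has_path_of_order_ex e) (@has_path_of_order_bound T e).

Definition detour_colouring (T : finType) (e : rel T) (n k : nat) (f : T -> 'I_k) : Prop :=
  forall s : seq T, is_gpath e s -> n < size s ->
    ~ (forall x y, x \in s -> y \in s -> f x = f y).

Definition has_detour_colouring (T : finType) (e : rel T) (n k : nat) : Prop :=
  exists f : T -> 'I_k, detour_colouring e n f.

(* chi_n(G) <= k  iff  G has an n-detour colouring using (at most) k colours,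
   i.e. a map into a k-element colour set (colours may be unused). *)
Definition chi_n_le (T : finType) (e : rel T) (n k : nat) : Prop :=
  has_detour_colouring e n k.

(* The bound of the theorem: ceil(a/b) for b>0 is (a + b - 1) %/ b. *)
Definition ceil_div (a b : nat) : nat := (a + b.-1) %/ b.

Definition detour_bound (t n : nat) : nat :=
  if n <= t then ceil_div (t - n) (ceil_div (2 * n + 2) 3) + 1 else 1.

(* Main.v *)
Require Import Defs.
From mathcomp Require Import all_boot zify.
Set Implicit Arguments. Unset Strict Implicit. Unset Printing Implicit Defensive.

Lemma path_flip (T : finType) (e : rel T) : symmetric e ->
  forall x s, path (fun z => e^~ z) x s = path e x s.
Proof. move=> sym x s; apply: eq_path => a b /=; exact: sym. Qed.

Lemma path_rcons_rev (T : finType) (e : rel T) : symmetric e ->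
  forall a t b, path e a (rcons t b) -> path e b (rcons (rev t) a).
Proof.
move=> sym a t b H.
have := rev_path e a (rcons t b).
rewrite last_rcons belast_rcons rev_cons => ->.
by rewrite path_flip.
Qed.

Lemma gpath_rev (T : finType) (e : rel T) : symmetric e ->
  forall s, is_gpath e s -> is_gpath e (rev s).
Proof.
move=> sym [//|x s] /andP[Hp Hu].
have Hu' : uniq (rev (x :: s)) by rewrite rev_uniq.
move: Hu'; rewrite (lastI x s) rev_rcons => Hu'.
rewrite /is_gpath Hu' andbT.
by rewrite rev_path path_flip.
Qed.

Definition sp (T : finType) (e : rel T) (s : seq T) :=
  if s is x :: s' then path e x s' else true.

Lemma gpathE (T : finType) (e : rel T) s : is_gpath e s = (s != [::]) && sp e s && uniq s.
Proof. by case: s. Qed.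

Lemma sp_rev1 (T : finType) (e : rel T) : symmetric e -> forall s, sp e s -> sp e (rev s).
Proof.
move=> sym [//|x s] /= Hp.
rewrite (lastI x s) rev_rcons /=.
by rewrite rev_path path_flip.
Qed.

Lemma sp_rev (T : finType) (e : rel T) : symmetric e -> forall s, sp e (rev s) = sp e s.
Proof.
move=> sym s; apply/idP/idP; last exact: sp_rev1.
by move/(sp_rev1 sym); rewrite revK.
Qed.

Lemma sp_cat1 (T : finType) (e : rel T) s v L :
  sp e (s ++ v :: L) = sp e (rcons s v) && path e v L.
Proof.
case: s => [|x s] /=; first by [].
by rewrite -cat_rcons cat_path last_rcons.
Qed.

Lemma arm_r (T : finType) (e : rel T) a v b : is_gpath e (a ++ v :: b) -> path e v b.
Proof. by rewrite gpathE sp_cat1 => /andP[/andP[_ /andP[_ ->]] _]. Qed.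

Lemma arm_l (T : finType) (e : rel T) : symmetric e ->
  forall a v b, is_gpath e (a ++ v :: b) -> path e v (rev a).
Proof.
move=> sym a v b /(gpath_rev sym); rewrite rev_cat rev_cons -cats1 -catA cat1s.
exact: arm_r.
Qed.

Lemma glue (T : finType) (e : rel T) : symmetric e ->
  forall (A U : {set T}) (v : T) (P' : seq T) (c : nat),
  is_gpath e (v :: P') -> {subset v :: P' <= U} -> (forall z, z \in v :: P' -> z \notin A) ->
  A \subset U ->
  (forall s, is_gpath e s -> {subset s <= U} -> size s < size (v :: P') + c) ->
  forall (R X Y0 W : seq T),
  path e v X -> path e (last v P') (Y0 ++ W) -> {subset Y0 <= A} ->
  (forall z, z \in Y0 -> z \notin R) ->
  uniq Y0 -> uniq (rev X ++ v :: W) -> {subset rev X ++ v :: W <= R} ->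
  {subset R <= v |: A} ->
  size X + size Y0 + size W < c.
Proof.
move=> sym A U v P' c HP HPU HPA HAU Hbig R X Y0 W HX HYW HY0A HY0R HY0u HXWu HXWR HRA.
set Q := rev X ++ v :: (P' ++ Y0 ++ W).
have HQ : is_gpath e Q.
  rewrite gpathE; apply/andP; split; first (apply/andP; split).
  - by rewrite /Q; case: (rev X).
  - rewrite /Q sp_cat1 -rev_cons sp_rev //= HX /=.
    rewrite cat_path; move: HP => /andP[-> _] /=; exact: HYW.
  - have Hperm : perm_eq Q ((P' ++ Y0) ++ (rev X ++ v :: W)).
      apply/permP => p; rewrite /Q !count_cat /= !count_cat; clear; lia.
    rewrite (perm_uniq Hperm) cat_uniq HXWu andbT.
    move: HP => /andP[_]; rewrite cons_uniq => /andP[HvP HP'u].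
    rewrite cat_uniq HP'u HY0u /=.
    apply/andP; split.
    + rewrite andbT; apply/hasPn => z Hz; apply/negP => HzP.
      by move: (HPA z); rewrite inE HzP orbT (HY0A z Hz) => /(_ isT).
    + apply/hasPn => z /HXWR HzR; rewrite mem_cat negb_or; apply/andP; split.
      * apply/negP => HzP; have := HRA z HzR; rewrite !inE => /orP[/eqP Ezv|HzA].
          by move: HvP; rewrite -Ezv HzP.
        by move: (HPA z); rewrite inE HzP orbT HzA => /(_ isT).
      * by apply/negP => /HY0R; rewrite HzR.
have HQU : {subset Q <= U}.
  move=> z; rewrite /Q mem_cat => /orP[Hz|].
    have HzR : z \in R by apply: HXWR; rewrite mem_cat Hz.
    have := HRA z HzR; rewrite !inE => /orP[/eqP->|/(subsetP HAU)//].
    by apply: HPU; rewrite inE eqxx.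
  rewrite inE => /orP[/eqP->|]; first by apply: HPU; rewrite inE eqxx.
  rewrite !mem_cat => /orP[Hz|/orP[Hz|Hz]].
  - by apply: HPU; rewrite inE Hz orbT.
  - exact: (subsetP HAU) (HY0A z Hz).
  - have HzR : z \in R by apply: HXWR; rewrite mem_cat inE Hz !orbT.
    have := HRA z HzR; rewrite !inE => /orP[/eqP->|/(subsetP HAU)//].
    by apply: HPU; rewrite inE eqxx.
have := Hbig Q HQ HQU.
rewrite /Q !size_cat /= !size_cat size_rev.
lia.
Qed.

Lemma subseq_pre (T : finType) (a b : seq T) v : subseq (a ++ [:: v]) (a ++ v :: b).
Proof. by apply: cat_subseq; rewrite ?subseq_refl //= eqxx sub0seq. Qed.

Lemma miss_lemma (T : finType) (e : rel T) : symmetric e ->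
  forall (A U : {set T}) (v : T) (P' : seq T) (c : nat),
  is_gpath e (v :: P') -> {subset v :: P' <= U} -> (forall z, z \in v :: P' -> z \notin A) ->
  A \subset U ->
  (forall s, is_gpath e s -> {subset s <= U} -> size s < size (v :: P') + c) ->
  forall (al be Y : seq T),
  is_gpath e (al ++ v :: be) -> {subset al ++ v :: be <= v |: A} ->
  path e (last v P') Y -> {subset Y <= A} -> uniq Y ->
  (forall z, z \in Y -> z \notin al ++ be) ->
  size al + size Y < c.
Proof.
move=> sym A U v P' c HP HPU HPA HAU Hbig al be Y HR HRA HY HYA HYu HYR.
have HvA : v \notin A by apply: HPA; rewrite inE eqxx.
have HRu : uniq (al ++ v :: be) by move: HR; rewrite gpathE => /andP[_ ->].
have := glue sym HP HPU HPA HAU Hbig (R := al ++ v :: be) (X := rev al) (Y0 := Y) (W := [::]).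
rewrite size_rev /= addn0; apply.
- exact: arm_l HR.
- by rewrite cats0.
- exact: HYA.
- move=> z Hz; apply/negP; rewrite mem_cat inE => /or3P[H|/eqP E|H].
  + by move: (HYR z Hz); rewrite mem_cat H.
  + by move: HvA; rewrite -E HYA.
  + by move: (HYR z Hz); rewrite mem_cat H orbT.
- exact: HYu.
- by rewrite revK; apply: subseq_uniq (subseq_pre al be v) HRu.
- by rewrite revK; apply: mem_subseq (subseq_pre al be v).
- exact: HRA.
Qed.

Lemma hit_lemma (T : finType) (e : rel T) : symmetric e ->
  forall (A U : {set T}) (v : T) (P' : seq T) (c : nat),
  is_gpath e (v :: P') -> {subset v :: P' <= U} -> (forall z, z \in v :: P' -> z \notin A) ->
  A \subset U ->
  (forall s, is_gpath e s -> {subset s <= U} -> size s < size (v :: P') + c) ->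
  forall (al be Y : seq T) (i : nat),
  is_gpath e (al ++ v :: be) -> {subset al ++ v :: be <= v |: A} ->
  path e (last v P') Y -> {subset Y <= A} -> uniq Y ->
  i < size Y -> nth v Y i \in be ->
  (forall z, z \in take i Y -> z \notin al ++ be) ->
  size al + i + (size be - index (nth v Y i) be) < c /\
  size al + i + 1 + index (nth v Y i) be < c.
Proof.
move=> sym A U v P' c HP HPU HPA HAU Hbig al be Y i HR HRA HY HYA HYu Hi Hxbe HY0R.
set x := nth v Y i in Hxbe *.
set j := index x be.
have HvA : v \notin A by apply: HPA; rewrite inE eqxx.
have HRu : uniq (al ++ v :: be) by move: HR; rewrite gpathE => /andP[_ ->].
have Hj : j < size be by rewrite index_mem.
have Hxj : nth v be j = x by rewrite nth_index.
have HYx : path e (last v P') (rcons (take i Y) x).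
  by rewrite /x -take_nth //; apply: take_path.
have Hbe : path e v be by apply: arm_r HR.
have Hsplit : be = take j be ++ x :: drop j.+1 be.
  by rewrite -{1}(cat_take_drop j be) (drop_nth v Hj) Hxj.
have Hdrop : path e x (drop j.+1 be).
  by move: Hbe; rewrite {1}Hsplit cat_path => /andP[_ /= /andP[_ ->]].
have Htake : path e v (rcons (take j be) x).
  by rewrite -Hxj -take_nth //; apply: take_path.
have Hrevt : path e x (rev (take j be)).
  by move: (path_rcons_rev sym Htake); rewrite rcons_path => /andP[-> _].
have HY0R' : forall z, z \in take i Y -> z \notin al ++ v :: be.
  move=> z Hz; apply/negP; rewrite mem_cat inE => /or3P[H|/eqP E|H].
  + by move: (HY0R z Hz); rewrite mem_cat H.
  + by move: HvA; rewrite -E HYA // (mem_take Hz).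
  + by move: (HY0R z Hz); rewrite mem_cat H orbT.
have HY0A : {subset take i Y <= A} by move=> z Hz; apply: HYA (mem_take Hz).
have HY0u : uniq (take i Y) by apply: take_uniq.
have Hsz : size (take i Y) = i by rewrite size_takel // ltnW.
split.
- have Hsub : subseq (al ++ v :: x :: drop j.+1 be) (al ++ v :: be).
    apply: cat_subseq; rewrite ?subseq_refl //= eqxx -Hxj -(drop_nth v Hj).
    exact: drop_subseq.
  have := glue sym HP HPU HPA HAU Hbig (R := al ++ v :: be) (X := rev al)
     (Y0 := take i Y) (W := x :: drop j.+1 be).
  rewrite size_rev Hsz /= size_drop revK => H.
  have : size al + i + (size be - j.+1).+1 < c.
    apply: H => //.
    + exact: arm_l HR.
    + by rewrite -cat_rcons cat_path HYx last_rcons.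
    + exact: subseq_uniq Hsub HRu.
    + exact: mem_subseq Hsub.
  move=> H'; clear -H' Hj; lia.
- have Hsub : subseq (al ++ v :: rcons (take j be) x) (al ++ v :: be).
    apply: cat_subseq; rewrite ?subseq_refl //= eqxx -Hxj -take_nth //.
    exact: take_subseq.
  have Hperm : perm_eq (al ++ v :: x :: rev (take j be)) (al ++ v :: rcons (take j be) x).
    apply/permP => p; rewrite !count_cat /= count_rev -cats1 count_cat /=; clear; lia.
  have := glue sym HP HPU HPA HAU Hbig (R := al ++ v :: be) (X := rev al)
     (Y0 := take i Y) (W := x :: rev (take j be)).
  rewrite size_rev Hsz /= size_rev size_takel ?(ltnW Hj) // revK => H.
  have : size al + i + j.+1 < c.
    apply: H => //.
    + exact: arm_l HR.
    + by rewrite -cat_rcons cat_path HYx last_rcons.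
    + by rewrite (perm_uniq Hperm); exact: subseq_uniq Hsub HRu.
    + by move=> z Hz; apply: (mem_subseq Hsub); rewrite -(perm_mem Hperm).
  move=> H'; clear -H'; lia.
Qed.

Definition arm_bound (c a1 a2 g : nat) (h : option (bool * nat)) : Prop :=
 match h with
 | None => a1 + g < c /\ a2 + g < c
 | Some (false, i) => exists y, y < g /\ i < a2 /\ a1 + y + (a2 - i) < c /\ a1 + y + 1 + i < c
 | Some (true, i) => exists y, y < g /\ i < a1 /\ a2 + y + (a1 - i) < c /\ a2 + y + 1 + i < c
 end.

Definition hit_in (T : finType) (v : T) (al be Y : seq T) (h : option (bool * nat)) : Prop :=
 match h with
 | None => True
 | Some (true, i) => nth v (rev al) i \in Y
 | Some (false, i) => nth v be i \in Y
 end.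

Lemma rev_R (T : finType) (al be : seq T) v : rev (al ++ v :: be) = rev be ++ v :: rev al.
Proof. by rewrite rev_cat rev_cons cat_rcons. Qed.

Lemma arm_lemma (T : finType) (e : rel T) : symmetric e ->
  forall (A U : {set T}) (v : T) (P' : seq T) (c : nat),
  is_gpath e (v :: P') -> {subset v :: P' <= U} -> (forall z, z \in v :: P' -> z \notin A) ->
  A \subset U ->
  (forall s, is_gpath e s -> {subset s <= U} -> size s < size (v :: P') + c) ->
  forall (al be Y : seq T),
  is_gpath e (al ++ v :: be) -> {subset al ++ v :: be <= v |: A} ->
  path e (last v P') Y -> {subset Y <= A} -> uniq Y ->
  exists h, arm_bound c (size al) (size be) (size Y) h /\ hit_in v al be Y h.
Proof.
move=> sym A U v P' c HP HPU HPA HAU Hbig al be Y HR HRA HY HYA HYu.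
have HR' : is_gpath e (rev be ++ v :: rev al) by rewrite -rev_R; apply: gpath_rev.
have HRA' : {subset rev be ++ v :: rev al <= v |: A}.
  by move=> z; rewrite -rev_R mem_rev; apply: HRA.
case Hh: (has (fun z => z \in al ++ be) Y).
- set i := find (fun z => z \in al ++ be) Y.
  have Hi : i < size Y by rewrite -has_find.
  have Hx : nth v Y i \in al ++ be by apply: (nth_find v Hh).
  have Hbef : forall z, z \in take i Y -> z \notin al ++ be.
    move=> z Hz; apply/negP => Hz'.
    have : has (fun z => z \in al ++ be) (take i Y) by apply/hasP; exists z.
    by rewrite has_take // ltnn.
  move: Hx; rewrite mem_cat => /orP[Hxa|Hxb].
  + exists (Some (true, index (nth v Y i) (rev al))).
    have Hxa' : nth v Y i \in rev al by rewrite mem_rev.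
    have [H1 H2] := hit_lemma sym HP HPU HPA HAU Hbig HR' HRA' HY HYA HYu Hi Hxa'
      (fun z Hz => ltac:(rewrite !mem_cat !mem_rev orbC -mem_cat; exact: Hbef z Hz)).
    split; last by rewrite /= nth_index // mem_nth.
    exists i; split => //; split; first by rewrite -(size_rev al) index_mem.
    by rewrite !size_rev in H1 H2; split.
  + exists (Some (false, index (nth v Y i) be)).
    have [H1 H2] := hit_lemma sym HP HPU HPA HAU Hbig HR HRA HY HYA HYu Hi Hxb Hbef.
    split; last by rewrite /= nth_index // mem_nth.
    exists i; split => //; split; first by rewrite index_mem.
    by split.
- exists None; split => //; split.
  + apply: (miss_lemma sym HP HPU HPA HAU Hbig HR HRA HY HYA HYu).
    by move=> z Hz; apply/negP => Hz'; move/negbT/hasPn: Hh => /(_ z Hz); rewrite Hz'.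
  + rewrite -(size_rev be).
    apply: (miss_lemma sym HP HPU HPA HAU Hbig HR' HRA' HY HYA HYu).
    move=> z Hz; apply/negP => Hz'; move/negbT/hasPn: Hh => /(_ z Hz).
    by move: Hz'; rewrite !mem_cat !mem_rev orbC => ->.
Qed.

Lemma num n c a1 a2 g1 g2 h1 h2 : 2 <= n -> 3*c <= 2*n+4 -> 2*n+4 < 3*c+3 ->
  n <= a1 + a2 -> n <= g1 + g2 -> a1 < c -> a2 < c -> g1 < c -> g2 < c ->
  arm_bound c a1 a2 g1 h1 -> arm_bound c a1 a2 g2 h2 -> (h1 = None \/ h1 <> h2) -> False.
Proof.
move=> H0 H1 H2 H3 H4 H5 H6 H7 H8 A1 A2 D.
case: h1 h2 A1 A2 D => [[[] i1]|] [[[] i2]|] /= A1 A2 D;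
  repeat match goal with H : exists _, _ |- _ => destruct H end;
  try (have Hne : i1 <> i2 by move=> E; subst; case: D);
  lia.
Qed.

Lemma arms_of (T : finType) (e : rel T) : symmetric e ->
  forall (A : {set T}) (w : T) (s : seq T),
  is_gpath e s -> {subset s <= w |: A} -> w \in s ->
  exists ga de, s = ga ++ w :: de /\ [/\ path e w (rev ga), path e w de,
     ({subset rev ga <= A} /\ {subset de <= A}),
     (uniq (rev ga) /\ uniq de) & forall z, z \in rev ga -> z \notin de].
Proof.
move=> sym A w s Hs HsA Hw.
case/splitPr: Hw Hs HsA => ga de Hs HsA.
have Hu : uniq (ga ++ w :: de) by move: Hs; rewrite gpathE => /andP[_ ->].
move: (Hu); rewrite cat_uniq cons_uniq => /and3P[Hga Hdis /andP[Hwde Hde]].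
have Hwga : w \notin ga by apply: (hasPn Hdis); rewrite inE eqxx.
exists ga, de; split => //; split => //.
- exact: arm_l Hs.
- exact: arm_r Hs.
- split => z Hz.
  + have : z \in w |: A by apply: HsA; rewrite mem_cat -mem_rev Hz.
    rewrite !inE => /orP[/eqP E|//]; by move: Hwga; rewrite -E -mem_rev Hz.
  + have : z \in w |: A by apply: HsA; rewrite mem_cat inE Hz !orbT.
    rewrite !inE => /orP[/eqP E|//]; by move: Hwde; rewrite -E Hz.
- by rewrite rev_uniq.
- move=> z; rewrite mem_rev => Hz; apply/negP => Hz'.
  by move: (hasPn Hdis z); rewrite inE Hz' orbT Hz => /(_ isT).
Qed.

Lemma key (T : finType) (e : rel T) : symmetric e ->
  forall (A U : {set T}) (n c : nat) (v : T) (P' : seq T),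
  2 <= n -> 3*c <= 2*n+4 -> 2*n+4 < 3*c+3 ->
  A \subset U -> (forall s, is_gpath e s -> {subset s <= A} -> size s <= n) ->
  (forall u, u \in U -> u \notin A -> exists s, [/\ is_gpath e s, {subset s <= u |: A} & n < size s]) ->
  is_gpath e (v :: P') -> {subset v :: P' <= U} -> (forall z, z \in v :: P' -> z \notin A) ->
  (forall s, is_gpath e s -> {subset s <= U} -> size s < size (v :: P') + c) -> False.
Proof.
move=> sym A U n c v P' Hn Hc1 Hc2 HAU Hgood Hmax HP HPU HPA Hbig.
have getR : forall u, u \in v :: P' -> exists s, [/\ is_gpath e s, {subset s <= u |: A}, n < size s & u \in s].
  move=> u Hu; have [s [Hs HsA Hsz]] := Hmax u (HPU u Hu) (HPA u Hu).
  exists s; split => //; apply/negPn/negP => Hus.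
  have : size s <= n.
    apply: Hgood Hs _ => z Hz; have := HsA z Hz; rewrite !inE => /orP[/eqP E|//].
    by move: Hus; rewrite -E Hz.
  by rewrite leqNgt Hsz.
have [R [HR HRA HRsz HvR]] := getR v (mem_head _ _).
have [S [HS HSA HSsz HwS]] := getR (last v P') (mem_last _ _).
case/splitPr: HvR HR HRA HRsz => al be HR HRA HRsz.
have [ga [de [ES [Hga Hde [HgaA HdeA] [Hgau Hdeu] Hdis]]]] := arms_of sym HS HSA HwS.
have [h1 [B1 I1]] := arm_lemma sym HP HPU HPA HAU Hbig HR HRA Hga HgaA Hgau.
have [h2 [B2 I2]] := arm_lemma sym HP HPU HPA HAU Hbig HR HRA Hde HdeA Hdeu.
have HR' : is_gpath e (rev be ++ v :: rev al) by rewrite -rev_R; apply: gpath_rev.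
have HRA' : {subset rev be ++ v :: rev al <= v |: A}.
  by move=> z; rewrite -rev_R mem_rev; apply: HRA.
have Ha1 : size al < c.
  have := miss_lemma sym HP HPU HPA HAU Hbig HR HRA (Y := [::]) isT.
  by rewrite addn0; apply.
have Ha2 : size be < c.
  have := miss_lemma sym HP HPU HPA HAU Hbig HR' HRA' (Y := [::]) isT.
  by rewrite addn0 size_rev; apply.
have Hv1 : is_gpath e ([::] ++ v :: [::]) by [].
have Hv1A : {subset [::] ++ v :: [::] <= v |: A} by move=> z; rewrite !inE => ->.
have Hg1 : size (rev ga) < c.
  by apply: (miss_lemma sym HP HPU HPA HAU Hbig Hv1 Hv1A Hga HgaA Hgau).
have Hg2 : size de < c.
  by apply: (miss_lemma sym HP HPU HPA HAU Hbig Hv1 Hv1A Hde HdeA Hdeu).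
apply: (num Hn Hc1 Hc2 _ _ Ha1 Ha2 Hg1 Hg2 B1 B2).
- move: HRsz; rewrite size_cat /=; lia.
- move: HSsz; rewrite ES size_cat /= size_rev; lia.
- case: h1 I1 {B1} => [h|]; last by left.
  right => E; subst h2; clear B2; case: h I1 I2 => [[] i] /= I1 I2.
  + by move: (Hdis _ I1); rewrite I2.
  + by move: (Hdis _ I1); rewrite I2.
Qed.

From Stdlib Require Import Classical.

Definition goodset (T : finType) (e : rel T) (n : nat) (A : {set T}) :=
  forall s, is_gpath e s -> {subset s <= A} -> size s <= n.

Lemma exists_max (T : finType) (e : rel T) (n : nat) (U : {set T}) :
  exists A : {set T}, [/\ A \subset U, goodset e n A &
    forall u, u \in U -> u \notin A ->
      exists s, [/\ is_gpath e s, {subset s <= u |: A} & n < size s]].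
Proof.
suff : forall m (A : {set T}), #|U :\: A| <= m -> A \subset U -> goodset e n A ->
  exists A' : {set T}, [/\ A' \subset U, goodset e n A' &
    forall u, u \in U -> u \notin A' ->
      exists s, [/\ is_gpath e s, {subset s <= u |: A'} & n < size s]].
  move=> H; apply: (H #|U| set0).
  - by rewrite setD0.
  - exact: sub0set.
  - by move=> [|x s] // _ /(_ x (mem_head _ _)); rewrite inE.
elim=> [|m IH] A Hcard HAU Hg;
  (case: (classic (forall u, u \in U -> u \notin A ->
      exists s, [/\ is_gpath e s, {subset s <= u |: A} & n < size s])) => H;
   [by exists A | ]);
  (have [u Hu] := not_all_ex_not _ _ H);
  (case: (boolP (u \in U)) => HuU; last by case: Hu => H'; rewrite H' in HuU);
  (case: (boolP (u \in A)) => HuA; first by case: Hu => _; rewrite HuA);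
  (have Hne : ~ exists s, [/\ is_gpath e s, {subset s <= u |: A} & n < size s]
     by move=> Hex; apply: Hu => _ _);
  (have HuD : u \in U :\: A by rewrite inE HuA HuU).
- by move: Hcard; rewrite (cardsD1 u) HuD.
- apply: (IH (u |: A)).
  + move: Hcard; rewrite (cardsD1 u (U :\: A)) HuD setDDl setUC.
    by rewrite add1n ltnS.
  + by rewrite subUset sub1set HuU HAU.
  + move=> s Hs HsA; rewrite leqNgt; apply/negP => Hsz; apply: Hne.
    by exists s.
Qed.

Lemma colour (T : finType) (e : rel T) : symmetric e ->
  forall (n c : nat), 2 <= n -> 3*c <= 2*n+4 -> 2*n+4 < 3*c+3 ->
  forall j (U : {set T}),
  (forall s, is_gpath e s -> {subset s <= U} -> size s <= n + j * c) ->
  exists f : T -> 'I_j.+1, forall s, is_gpath e s -> {subset s <= U} -> n < size s ->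
    ~ (forall x y, x \in s -> y \in s -> f x = f y).
Proof.
move=> sym n c Hn Hc1 Hc2; elim=> [|j IH] U HU.
  exists (fun _ => ord0) => s Hs HsU Hsz _.
  by move: (HU s Hs HsU); rewrite mul0n addn0 leqNgt Hsz.
have [A [HAU Hg Hmax]] := exists_max e n U.
have HB : forall s, is_gpath e s -> {subset s <= U :\: A} -> size s <= n + j * c.
  move=> [//|v P'] Hs HsB; rewrite leqNgt; apply/negP => Hsz.
  apply: (key sym Hn Hc1 Hc2 HAU Hg Hmax Hs).
  - by move=> z /HsB; rewrite inE => /andP[].
  - by move=> z /HsB; rewrite inE => /andP[].
  - move=> s' Hs' Hs'U; have := HU s' Hs' Hs'U; rewrite mulSn; lia.
have [g Hgc] := IH (U :\: A) HB.
exists (fun x => if x \in A then ord_max else widen_ord (leqnSn _) (g x)).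
move=> [//|x0 s] Hs HsU Hsz Hmono.
have Hne : forall y, y \notin A -> (widen_ord (leqnSn _) (g y) : 'I_j.+2) != ord_max.
  by move=> y _; rewrite -val_eqE /= neq_ltn ltn_ord.
case: (boolP (x0 \in A)) => Hx0.
- have HsA : {subset x0 :: s <= A}.
    move=> y Hy; apply/negPn/negP => HyA.
    have := Hmono x0 y (mem_head _ _) Hy; rewrite Hx0 (negbTE HyA) => E.
    by move: (Hne y HyA); rewrite -E eqxx.
  by move: (Hg _ Hs HsA); rewrite leqNgt Hsz.
- have HsnA : forall y, y \in x0 :: s -> y \notin A.
    move=> y Hy; apply/negP => HyA.
    have := Hmono x0 y (mem_head _ _) Hy; rewrite HyA (negbTE Hx0) => E.
    by move: (Hne x0 Hx0); rewrite E eqxx.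
  apply: (Hgc _ Hs _ Hsz).
  + by move=> y Hy; rewrite inE (HsnA y Hy) HsU.
  + move=> x y Hx Hy; have := Hmono x y Hx Hy.
    rewrite (negbTE (HsnA x Hx)) (negbTE (HsnA y Hy)) => /(congr1 val) /= E.
    by apply: val_inj.
Qed.

Lemma tau_ge (T : finType) (e : rel T) s : is_gpath e s -> size s <= tau e.
Proof.
move=> Hs; rewrite /tau; case: ex_maxnP => t _; apply.
by rewrite /has_path_of_order; apply/orP; right; apply/existsP; exists (in_tuple s).
Qed.

Unset Implicit Arguments.
Set Strict Implicit.

Theorem theorem1p28 (T : finType) (e : rel T) (n : nat) :
  simple_graph e -> 2 <= n ->
  chi_n_le e n (detour_bound (tau e) n).
Proof.
move=> [sym _] Hn.
set c := ceil_div (2 * n + 2) 3.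
have Hc : 3 * c <= 2 * n + 4 /\ 2 * n + 4 < 3 * c + 3.
  rewrite /c /ceil_div /=.
  have := divn_eq (2 * n + 2 + 2) 3; have := ltn_pmod (2 * n + 2 + 2) (isT : 0 < 3).
  set q := _ %/ 3; set r := _ %% 3; lia.
case: Hc => Hc1 Hc2.
have Hc0 : 0 < c by lia.
rewrite /chi_n_le /has_detour_colouring /detour_bound.
case: ifP => Hnt.
- set j := ceil_div (tau e - n) c.
  have Hj : tau e <= n + j * c.
    rewrite /j /ceil_div.
    have := divn_eq (tau e - n + c.-1) c; have := ltn_pmod (tau e - n + c.-1) Hc0.
    set q := _ %/ c; set r := _ %% c; set N := q * c; lia.
  have [f Hf] := colour sym Hn Hc1 Hc2 (U := setT) (j := j)
    (fun s Hs _ => leq_trans (tau_ge Hs) Hj).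
  rewrite addn1; exists f => s Hs Hsz; apply: Hf => //.
  by move=> z; rewrite in_setT.
- have [f Hf] := colour sym Hn Hc1 Hc2 (U := setT) (j := 0)
    (fun s Hs _ => ltac:(rewrite mul0n addn0; apply: leq_trans (tau_ge Hs) _; lia)).
  exists f => s Hs Hsz; apply: Hf => //.
  by move=> z; rewrite in_setT.
Qed.
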